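(* Let $\boldsymbol\mu=\{\mu_t\}_{t>0}$ be a factorizing family over $[0,1]\times L$. Then for every $0\le s<t\le1$, the measures $(R_{s,t})_*\mu_1$ and $\mu_{t-s}$ on $\mathscr C_{t-s}$ are mutually absolutely continuous, where $R_{s,t}:\mathscr C_1\to\mathscr C_{t-s}$ is $R_{s,t}(Z)=(Z\cap([s,t]\times L))-(s,0)$.
   Context: Let $L$ be a locally compact, second countable Hausdorff space. For $t>0$ let $\mathscr C_t$ be the space of closed subsets of $[0,t]\times L$ with the Borel $\sigma$-field of the Fell topology. For $s,t>0$, $\oplus_{s,t}(Z_1,Z_2)=Z_1\cup\{(s+r,\ell):(r,\ell)\in Z_2\}$, and $A-(s,0)=\{(r-s,\ell):(r,\ell)\in A\}$. A family $\{\mu_t\}_{t>0}$ of probability measures on $\mathscr C_t$ is a factorizing family over $[0,1]\times L$ if (i) $\mu_{s+t}$ and $(\mu_s\otimes\mu_t)\circ\oplus_{s,t}^{-1}$ are mutually absolutely continuous for all $s,t>0$, and (ii) $\mu_t(\{Z:Z\cap(\{r\}\times L)\neq\varnothing\})=0$ for all $t>0$, $r\in[0,t]$. *)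

(* Defs.v *)
From HB Require Import structures.
From mathcomp Require Import all_boot all_order all_algebra.
From mathcomp Require Import all_classical all_reals all_analysis.
Unset Printing Implicit Defensive.
Import Order.TTheory GRing.Theory Num.Theory numFieldNormedType.Exports.
Local Open Scope classical_set_scope.
Local Open Scope ring_scope.

Section Fell.
Context {R : realType} {L : topologicalType}.

Definition strip (t : R) : set (R * L) := `[0, t] `*` [set: L].

(* closed subsets of [0,t] x L (closed in [0,t] x L, i.e. closed in R x L
   and contained in [0,t] x L, since [0,t] x L is closed) *)
Definition closed_in_strip (t : R) (Z : set (R * L)) : Prop :=
  closed Z /\ Z `<=` strip t.

Definition ClosedSub (t : R) := {Z : set (R * L) | closed_in_strip t Z}.

Lemma closed_in_strip0 (t : R) : closed_in_strip t set0.
Proof. by split; [exact: closed0 | exact: sub0set]. Qed.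

HB.instance Definition _ (t : R) := gen_eqMixin (ClosedSub t).
HB.instance Definition _ (t : R) := gen_choiceMixin (ClosedSub t).
HB.instance Definition _ (t : R) :=
  isPointed.Build (ClosedSub t) (exist _ set0 (closed_in_strip0 t)).

Definition fell_subbase (t : R) : set (set (ClosedSub t)) :=
  [set U | (exists K : set (R * L), compact K /\ K `<=` strip t /\
               U = [set Z | proj1_sig Z `&` K = set0])
        \/ (exists G : set (R * L),
               (exists G' : set (R * L), open G' /\ G = G' `&` strip t) /\
               U = [set Z | proj1_sig Z `&` G !=set0])].

Definition generated_topology {T : Type} (S : set (set T)) : set (set T) :=
  fun O => forall F : set (set T), S `<=` F -> F setT ->
    (forall A B, F A -> F B -> F (A `&` B)) ->
    (forall G : set (set T), G `<=` F -> F (\bigcup_(A in G) A)) -> F O.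

Definition fell_open (t : R) : set (set (ClosedSub t)) :=
  generated_topology (fell_subbase t).

Definition Ct (t : R) := g_sigma_algebraType (fell_open t).

(* build an element of C_t from a set (defaults to the empty set if the
   set is not a closed subset of [0,t] x L; this never happens in the
   uses below) *)
Definition mkC (t : R) (A : set (R * L)) : Ct t :=
  match pselect (closed_in_strip t A) with
  | left h => exist _ A h
  | right _ => exist _ set0 (closed_in_strip0 t)
  end.

Definition shiftl (s : R) (A : set (R * L)) : set (R * L) :=
  (fun q : R * L => (q.1 - s, q.2)) @` A.

Definition oplus (s t : R) (p : Ct s * Ct t) : Ct (s + t) :=
  mkC (s + t) (proj1_sig p.1 `|`
               (fun q : R * L => (s + q.1, q.2)) @` proj1_sig p.2).

Definition restr (s t : R) (Z : Ct 1) : Ct (t - s) :=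
  mkC (t - s) (shiftl s (proj1_sig Z `&` (`[s, t] `*` [set: L]))).

Definition mutually_ac {d : measure_display}
    {T' : measurableType d} (m1 m2 : set T' -> \bar R) : Prop :=
  m1 `<< m2 /\ m2 `<< m1.

Definition factorizing (mu : forall t : R, probability (Ct t) R) : Prop :=
  (forall s t : R, 0 < s -> 0 < t ->
     mutually_ac (mu (s + t))
       (pushforward ((mu s) \x (mu t))%E (@oplus s t))) /\
  (forall t : R, 0 < t -> forall r : R, 0 <= r <= t ->
     mu t [set Z : Ct t | exists l : L, proj1_sig Z (r, l)] = 0%E).

End Fell.

(* Main.v *)
Require Import Defs.
From HB Require Import structures.
From mathcomp Require Import all_boot all_order all_algebra.
From mathcomp Require Import all_classical all_reals all_analysis.
From mathcomp Require Import lra finmap.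
Import Order.TTheory GRing.Theory Num.Theory numFieldNormedType.Exports.
Local Open Scope classical_set_scope.
Local Open Scope ring_scope.
Section Cover.
Context {T : topologicalType}.

Lemma compact_In0_ne (A : set T) (I : choiceType) (D : set I) (f : I -> set T) :
  compact A -> closed_fam_of A D f -> finI D f -> (exists i, D i) ->
  \bigcap_(i in D) f i !=set0.
Proof.
move=> Aco [g gcl feAg] finIf [i Di].
have [|p [Ap clfinIfp]] := Aco _ (finI_filter finIf).
  by exists (f i); [apply: finI_from1|rewrite feAg // => ? []].
exists p => j Dj; rewrite feAg //; split=> //; apply: gcl => // B.
by apply: clfinIfp; exists (f j); [apply: finI_from1|rewrite feAg // => ? []].
Qed.

Lemma compact_cover_ (A : set T) (I : choiceType) (D : set I) (f : I -> set T) :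
  compact A -> (forall i, D i -> open (f i)) -> A `<=` cover D f ->
  finite_subset_cover D f A.
Proof.
move=> Aco fop fcov.
have [g gop feAg] : open_fam_of A D (fun i => A `&` f i).
  by exists f.
have gcov : A `<=` cover D (fun i => A `&` f i).
  by move=> p Ap; have [i Di fip] := fcov p Ap; exists i.
suff [D' sD sc] : finite_subset_cover D (fun i => A `&` f i) A.
  by exists D' => // p /sc [i D'i [_ fip]]; exists i.
move: gcov; set h := (fun i => A `&` f i) => fcov'.
case: (pselect (exists i, D i)) => [[j Dj] | /asboolP]; last first.
  rewrite asbool_neg => /forallp_asboolPn D0.
  by exists fset0 => // ? /fcov' [? /D0].
apply/exists2P; apply: contrapT.
move=> /asboolP; rewrite asbool_neg => /forallp_asboolPn sfncov.
suff [p IAnfp] : \bigcap_(i in D) (A `\` h i) !=set0.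
  by have /IAnfp [Ap _] := Dj; have /fcov' [k /IAnfp [_]] := Ap.
apply: (@compact_In0_ne A I D (fun i => A `\` h i) Aco); last by exists j.
  exists (fun i => ~` g i) => i Di; first exact/open_closedC/gop.
  rewrite predeqE => p; split=> [[Ap nfip] | [Ap ngip]]; split=> //.
    by move=> gip; apply: nfip; rewrite /h feAg.
  by rewrite /h feAg // => - [].
move=> D' sD.
have /asboolP : ~ A `<=` cover [set` D'] h by move=> sAIf; exact: (sfncov D').
rewrite asbool_neg => /existsp_asboolPn [p /asboolP].
rewrite asbool_neg => /imply_asboolPn [Ap nUfp].
by exists p => i D'i; split=> // fip; apply: nUfp; exists i.
Qed.

End Cover.
Section Topo.
Context {R : realType} {L : topologicalType}.

Definition tr (c : R) (q : R * L) : R * L := (q.1 + c, q.2).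

Lemma tr_continuous c : continuous (tr c).
Proof.
move=> [x y] A /= [[P Q] [Px Qy] PQA].
exists ((fun r => r + c) @^-1` P, Q) => /=.
  split => //.
  have : (fun r : R => r + c) @ x --> x + c.
    by apply: cvgD; [exact: cvg_id | exact: cvg_cst].
  by move/(_ P Px).
by move=> [r l] [/= Pr Ql]; apply: PQA.
Qed.

Lemma trK c q : tr c (tr (- c) q) = q.
Proof. by case: q => x y; rewrite /tr /= subrK. Qed.

Lemma trNK c q : tr (- c) (tr c q) = q.
Proof. by case: q => x y; rewrite /tr /= addrK. Qed.

Lemma image_tr c (A : set (R * L)) : tr c @` A = tr (- c) @^-1` A.
Proof.
apply/seteqP; split => [_ [q Aq <-]|q Aq].
  by rewrite /= trNK.
by exists (tr (- c) q) => //; rewrite trK.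
Qed.

Lemma closed_tr c (A : set (R * L)) : closed A -> closed (tr c @` A).
Proof.
move=> cA; rewrite image_tr.
exact: (proj1 (continuous_closedP _) (tr_continuous (- c)) _ cA).
Qed.

Lemma compact_tr c (K : set (R * L)) : compact K -> compact (tr c @` K).
Proof.
move=> cK; apply: continuous_compact => //.
exact/continuous_subspaceT/tr_continuous.
Qed.

Lemma closedXT (A : set R) : closed A -> closed (A `*` [set: L]).
Proof.
move=> cA.
have -> : A `*` [set: L] = fst @^-1` A.
  by apply/seteqP; split => [[x y] [] //|[x y] /= Ax].
apply: (proj1 (continuous_closedP _)) cA.
move=> [x y] B /= Bx; exists (B, setT) => //=; first by split => //; exact: filterT.
by move=> [r l] [/= Br _].
Qed.

Lemma closed_strip t : closed (@strip R L t).
Proof. exact/closedXT/itv_closed. Qed.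

End Topo.
Section Sets.
Context {R : realType} {L : topologicalType}.
Local Notation tr := (@tr R L).
Local Notation Ct := (@Ct R L).

Lemma stripP t (p : R * L) : strip t p <-> 0 <= p.1 <= t.
Proof. by rewrite /strip /= in_itv /=; split => [[]|]. Qed.

Lemma mkCE (t : R) (A : set (R * L)) : closed_in_strip t A -> proj1_sig (@mkC R L t A) = A.
Proof. by move=> h; rewrite /mkC; case: pselect. Qed.

Lemma Ct_ext {t} (Z Z' : Ct t) : proj1_sig Z = proj1_sig Z' -> Z = Z'.
Proof.
case: Z => A hA; case: Z' => B hB /= AB; subst B.
by rewrite (Prop_irrelevance hA hB).
Qed.

Lemma CtP {t} (Z : Ct t) : closed_in_strip t (proj1_sig Z).
Proof. exact: proj2_sig Z. Qed.

Lemma Ct_strip {t} (Z : Ct t) p : proj1_sig Z p -> 0 <= p.1 <= t.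
Proof. by move=> /(proj2 (CtP Z)) /stripP. Qed.

Lemma image_trP c (A : set (R * L)) p : (tr c @` A) p <-> A (tr (- c) p).
Proof. by rewrite image_tr. Qed.

Definition restrG (u d s : R) (Z : Ct u) : Ct d :=
  @mkC R L d (tr (- s) @` (proj1_sig Z `&` (`[s, s + d] `*` [set: L]))).

Lemma restr_restrG s t : @restr R L s t = restrG 1 (t - s) s.
Proof.
apply/funext => Z; rewrite /restr /restrG /shiftl.
by rewrite (addrC s) subrK.
Qed.

Lemma cis_oplus a b (A B : set (R * L)) : 0 <= a -> 0 <= b ->
  closed_in_strip a A -> closed_in_strip b B ->
  closed_in_strip (a + b) (A `|` tr a @` B).
Proof.
move=> a0 b0 [cA sA] [cB sB]; split.
  by apply: closedU => //; exact: closed_tr.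
move=> p [/sA /stripP /andP [p0 pa]|/image_trP /sB /stripP /= /andP [p0 pb]];
  apply/stripP/andP; split; rewrite /= in p0 *; lra.
Qed.

Lemma cis_restr u d s (Z : Ct u) :
  closed_in_strip d (tr (- s) @` (proj1_sig Z `&` (`[s, s + d] `*` [set: L]))).
Proof.
have [cZ _] := CtP Z; split.
  apply: closed_tr.
  have h2 : closed (`[s, s + d] `*` [set: L]) by apply: closedXT; exact: itv_closed.
  exact (closedI cZ h2).
move=> p /image_trP [_ [/= + _]]; rewrite in_itv /= => /andP [h1 h2].
apply/stripP; rewrite /= in h1 h2 *; apply/andP; split; lra.
Qed.

Lemma restrGE u d s (Z : Ct u) : proj1_sig (restrG u d s Z) =
  tr (- s) @` (proj1_sig Z `&` (`[s, s + d] `*` [set: L])).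
Proof. exact/mkCE/cis_restr. Qed.

Lemma restrGP u d s (Z : Ct u) p : proj1_sig (restrG u d s Z) p <->
  proj1_sig Z (p.1 + s, p.2) /\ 0 <= p.1 <= d.
Proof.
rewrite restrGE image_trP /= opprK; split.
  move=> [h [/= + _]]; rewrite in_itv /= => /andP [h1 h2].
  by split => //; apply/andP; split; lra.
move=> [h /andP [h1 h2]]; split => //; split => //=.
by rewrite in_itv /=; apply/andP; split; lra.
Qed.

Lemma oplusE a b (Z1 : Ct a) (Z2 : Ct b) : 0 <= a -> 0 <= b ->
  proj1_sig (oplus a b (Z1, Z2)) = proj1_sig Z1 `|` tr a @` proj1_sig Z2.
Proof.
move=> a0 b0; rewrite /oplus /=.
have -> : (fun q : R * L => (a + q.1, q.2)) = tr a.
  by apply/funext => q; rewrite /tr addrC.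
by apply: mkCE; apply: cis_oplus => //; exact: CtP.
Qed.

Lemma oplusP a b (Z1 : Ct a) (Z2 : Ct b) p : 0 <= a -> 0 <= b ->
  proj1_sig (oplus a b (Z1, Z2)) p <->
  proj1_sig Z1 p \/ proj1_sig Z2 (p.1 - a, p.2).
Proof.
move=> a0 b0; rewrite oplusE //; split => [[h|/image_trP h]|[h|h]].
- by left.
- by right.
- by left.
- by right; apply/image_trP.
Qed.

Lemma restr_oplus_l a b d (Z1 : Ct a) (Z2 : Ct b) : 0 < a -> 0 < b ->
  ~ (exists l, proj1_sig Z1 (a, l)) ->
  restrG (a + b) d a (oplus a b (Z1, Z2)) = restrG b d 0 Z2.
Proof.
move=> a0 b0 nH; apply: Ct_ext; apply/seteqP; split => p.
  move=> /restrGP [/oplusP] [] //; try exact: ltW.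
  - move=> /[dup] /Ct_strip /= /andP [_ h] Zp [/andP [h1 h2]].
    have e : p.1 + a = a by lra.
    by exfalso; apply: nH; exists p.2; rewrite ?e ?e1 in Zp.
  - rewrite /= addrK -surjective_pairing => Z2p hp; apply/restrGP.
    by rewrite addr0 -surjective_pairing.
move=> /restrGP [] /=; rewrite addr0 -surjective_pairing => Z2p hp.
apply/restrGP; split => //; apply/oplusP; try exact: ltW.
by right; rewrite /= addrK -surjective_pairing.
Qed.

Lemma restr_oplus_r d e (Z1 : Ct d) (Z2 : Ct e) : 0 < d -> 0 < e ->
  ~ (exists l, proj1_sig Z2 (0, l)) ->
  restrG (d + e) d 0 (oplus d e (Z1, Z2)) = Z1.
Proof.
move=> d0 e0 nH; apply: Ct_ext; apply/seteqP; split => p.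
  move=> /restrGP [/oplusP] [] //; try exact: ltW.
  - by rewrite /= addr0 -surjective_pairing.
  - move=> /[dup] /Ct_strip /= /andP [h _] Zp /andP [h1 h2].
    have e1 : p.1 + 0 - d = 0 by lra.
    by exfalso; apply: nH; exists p.2; rewrite ?e ?e1 in Zp.
move=> Z1p; apply/restrGP; rewrite /= addr0 -surjective_pairing; split.
  by apply/oplusP; try exact: ltW; left.
exact: Ct_strip Z1p.
Qed.

Lemma restr_id d (Z : Ct d) : restrG d d 0 Z = Z.
Proof.
apply: Ct_ext; apply/seteqP; split => p.
  by move=> /restrGP []; rewrite addr0 -surjective_pairing.
move=> Zp; apply/restrGP; rewrite addr0 -surjective_pairing; split => //.
exact: Ct_strip Zp.
Qed.

End Sets.
Section Base.
Context {L : topologicalType}.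

Definition good_base (b : nat -> set L) :=
  (forall n, open (b n)) /\
  (forall x W, nbhs x W -> exists n,
     [/\ b n x, closure (b n) `<=` W & compact (closure (b n))]).

Lemma good_base_exists : locally_compact [set: L] -> @second_countable L ->
  hausdorff_space L -> exists b, good_base b.
Proof.
move=> lc [B cB [Bo Bb]] hL.
have [f finj] := countable_injP _ cB.
pose b n := \bigcup_(U in [set U | B U /\ f U = n]) U.
have bf U : B U -> b (f U) = U.
  move=> BU; apply/seteqP; split => [x|x Ux]; rewrite /b.
    move=> [V [BV fV] Vx].
    have VU : V = U.
      apply: finj => //; exact/mem_set.
    by rewrite -VU.
  by exists U.
exists b; split.
  by move=> n; apply: bigcup_open => U [BU _]; exact: Bo.
move=> x W Wx.
have [C] := lc x I; rewrite withinET => Cx [cptC clC].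
have WCx : nbhs x (W `&` C) by exact: filterI.
have [D Dx DWC] := compact_regular hL cptC Cx WCx.
have [U [BU Ux] UD] := Bb x D Dx.
exists (f U); rewrite bf //; split => //.
  by move=> y /(closureS UD) /DWC [].
apply: (subclosed_compact (@closed_closure _ U) cptC).
by move=> y /(closureS UD) /DWC [].
Qed.

End Base.
Section Boxes.
Context {R : realType} {L : topologicalType}.
Context (b : nat -> set L) (hb : good_base b).

Definition idx := (rat * rat * nat)%type.

Definition openbox (i : idx) : set (R * L) :=
  `](ratr i.1.1 : R), ratr i.1.2[ `*` b i.2.

Definition cb (n : nat) : set L :=
  if pselect (compact (closure (b n))) then closure (b n) else set0.

Definition closedbox (i : idx) : set (R * L) :=
  `[(ratr i.1.1 : R), ratr i.1.2] `*` cb i.2.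

Lemma openX_ {U V : topologicalType} (A : set U) (B : set V) :
  open A -> open B -> open (A `*` B).
Proof.
move=> oA oB; rewrite openE => p [Ap Bp]; exists (A, B) => //=.
by split; apply: open_nbhs_nbhs; split.
Qed.

Lemma openbox_open i : open (openbox i).
Proof. by apply: openX_; [exact: itv_open | exact: hb.1]. Qed.

Lemma cb_compact n : compact (cb n).
Proof.
rewrite /cb; destruct (pselect (compact (closure (b n)))) => //.
exact: compact0.
Qed.

Lemma closedbox_compact i : compact (closedbox i).
Proof. exact (compact_setX (@segment_compact R _ _) (cb_compact _)). Qed.

Lemma box_approx (p : R * L) W : nbhs p W ->
  exists i : idx, [/\ openbox i p, closedbox i `<=` W & openbox i `<=` closedbox i].
Proof.
case: p => x y [[P Q] [/= Px Qy] PQW].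
have [e e0 eP] := proj1 (nbhs_ballP _ _) Px.
rewrite ball_itv in eP; rewrite /= in e0.
have [q1] := @rat_in_itvoo R (x - e) x ltac:(lra).
rewrite in_itv /= => /andP [q1a q1b].
have [q2] := @rat_in_itvoo R x (x + e) ltac:(lra).
rewrite in_itv /= => /andP [q2a q2b].
have [n [bny cbQ cpt]] := hb.2 y Q Qy.
have cbn : cb n = closure (b n) by rewrite /cb; case: pselect.
exists (q1, q2, n); split.
- by split => //=; rewrite in_itv /=; apply/andP.
- move=> [r l] [/= + /=]; rewrite cbn in_itv /= => /andP [r1 r2] /cbQ Ql.
  have Pr : P r by apply: eP; rewrite /= in_itv /=; apply/andP; split; lra.
  exact: (PQW (r, l) (conj Pr Ql)).
- move=> [r l] [/= + /=]; rewrite !in_itv /= => /andP [r1 r2] bl.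
  split; first by rewrite /= in_itv /=; apply/andP; split; lra.
  by rewrite /= cbn; exact: subset_closure.
Qed.

End Boxes.
Section Fell.
Context {R : realType} {L : topologicalType}.
Context (b : nat -> set L) (hb : good_base b).
Context (d : R).
Local Notation openbox := (@openbox R L b).
Local Notation closedbox := (@closedbox R L b).

Definition Kms (ms : seq idx) : set (R * L) :=
  [set p | strip d p /\ exists2 i, i \in ms & closedbox i p].

Definition Wb (m : seq idx * seq idx) : set (@Ct R L d) :=
  [set Z | proj1_sig Z `&` Kms m.1 = set0 /\
     forall i, i \in m.2 -> proj1_sig Z `&` (openbox i `&` strip d) !=set0].

Lemma Kms_nil : Kms [::] = set0.
Proof. by apply/seteqP; split => p // [_ [i]]. Qed.

Lemma Kms_cons i ms : Kms (i :: ms) = (closedbox i `&` strip d) `|` Kms ms.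
Proof.
apply/seteqP; split => p.
  move=> [sp [j]]; rewrite inE => /orP [/eqP ->|jms] cp; [left|right] => //.
  by split => //; exists j.
move=> [[cp sp]|[sp [j jms cp]]]; split => //.
  by exists i => //; rewrite inE eqxx.
by exists j => //; rewrite inE jms orbT.
Qed.

Lemma Kms_cat ms1 ms2 : Kms (ms1 ++ ms2) = Kms ms1 `|` Kms ms2.
Proof.
elim: ms1 => [|i ms IH]; first by rewrite Kms_nil set0U.
by rewrite cat_cons !Kms_cons IH setUA.
Qed.

Lemma Kms_compact ms : compact (Kms ms).
Proof.
elim: ms => [|i ms IH]; first by rewrite Kms_nil; exact: compact0.
rewrite Kms_cons; apply: compactU => //.
exact (compact_closedI (closedbox_compact b i) (closed_strip d)).
Qed.

Lemma Kms_strip ms : Kms ms `<=` strip d.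
Proof. by move=> p []. Qed.

Lemma Wb_cat ms1 hs1 ms2 hs2 :
  Wb (ms1 ++ ms2, hs1 ++ hs2) = Wb (ms1, hs1) `&` Wb (ms2, hs2).
Proof.
apply/seteqP; split => Z /=.
  rewrite /Wb /= Kms_cat setIUr setU_eq0 => -[[h1 h2] hh]; split; split => //.
  - by move=> i ih; apply: hh; rewrite mem_cat ih.
  - by move=> i ih; apply: hh; rewrite mem_cat ih orbT.
rewrite /Wb /= Kms_cat setIUr => -[[h1 hh1] [h2 hh2]]; split.
  by rewrite h1 h2 setU0.
by move=> i; rewrite mem_cat => /orP [/hh1|/hh2].
Qed.

Lemma fell_approx O : fell_open d O ->
  forall Z, O Z -> exists m, Wb m Z /\ Wb m `<=` O.
Proof.
move=> hO; apply: (hO [set O | forall Z, O Z -> exists m, Wb m Z /\ Wb m `<=` O]).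
- move=> U [[K [cK [sK ->]]]|[G [[G' [oG' ->]] ->]]] Z /= ZU.
  + have cov : K `<=` cover [set i | closedbox i `&` proj1_sig Z = set0 /\
                                  openbox i `<=` closedbox i] openbox.
      move=> k Kk.
      have nZk : ~ proj1_sig Z k.
        by move=> Zk; have : (proj1_sig Z `&` K) k by []; rewrite ZU.
      have hn : nbhs k (~` proj1_sig Z).
        apply: open_nbhs_nbhs; split => //.
        exact/closed_openC/(proj1 (CtP Z)).
      have [i [ik ciZ oc]] := @box_approx R L b hb k _ hn.
      exists i => //; split => //; apply/seteqP; split => p // [/ciZ + Zp].
      by [].
    have [D' sD Kc] := compact_cover_ _ _ _ _ cK (fun i _ => @openbox_open R L b hb i) cov.
    exists (enum_fset D', [::]); split.
      split => //; apply/seteqP; split => p // [Zp [_ [i iD cp]]].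
      have := sD i iD; rewrite in_setE => -[ciZ _].
      by have : (closedbox i `&` proj1_sig Z) p by []; rewrite ciZ.
    move=> Z' [Z'K _]; apply/seteqP; split => k // [Z'k Kk].
    have [i iD ok] := Kc k Kk.
    have := sD i iD; rewrite in_setE => -[_ oc].
    have : (proj1_sig Z' `&` Kms (enum_fset D')) k.
      by split => //; split; [exact: sK | exists i => //; exact: oc].
    by rewrite Z'K.
  + have [z [Zz [G'z sz]]] := ZU.
    have hn : nbhs z G' by apply: open_nbhs_nbhs.
    have [i [iz ciG oc]] := @box_approx R L b hb z _ hn.
    exists ([::], [:: i]); split.
      split; first by rewrite Kms_nil setI0.
      by move=> j; rewrite inE => /eqP ->; exists z.
    move=> Z' [_ h]; have [p [Z'p [ip sp]]] := h i (mem_head _ _).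
    by exists p; split => //; split => //; apply/ciG/oc.
- move=> Z _; exists ([::], [::]); split => //.
  by split => //; rewrite Kms_nil setI0.
- move=> A B hA hB Z [ZA ZB].
  have [[ms1 hs1] [W1 W1A]] := hA Z ZA.
  have [[ms2 hs2] [W2 W2B]] := hB Z ZB.
  exists (ms1 ++ ms2, hs1 ++ hs2); rewrite Wb_cat; split => //.
  by move=> Y [/W1A ? /W2B ?].
- move=> G hG Z [A GA AZ]; have [m [Wm WmA]] := hG A GA Z AZ.
  by exists m; split => // Y /WmA ?; exists A.
Qed.

Lemma fell_measurable dX (X : measurableType dX) (f : X -> @Ct R L d) :
  (forall K, compact K -> K `<=` strip d ->
     measurable [set x | proj1_sig (f x) `&` K = set0]) ->
  (forall i, measurable [set x | proj1_sig (f x) `&` (openbox i `&` strip d) !=set0]) ->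
  measurable_fun setT f.
Proof.
move=> H1 H2.
apply: (@measurability _ _ _ _ setT f (fell_open d)) => //.
move=> _ [Op hO <-]; rewrite setTI.
have -> : f @^-1` Op = bigcup [set: seq idx * seq idx] (fun m =>
    (if pselect (Wb m `<=` Op) then f @^-1` Wb m else set0)).
  apply/seteqP; split => x.
    move=> Ofx; have [m [Wm WmO]] := fell_approx Op hO (f x) Ofx; exists m => //.
    by destruct (pselect (Wb m `<=` Op)).
  by move=> [m _]; destruct (pselect (Wb m `<=` Op)) as [WO|] => //; apply: WO.
apply: countable_bigcupT_measurable; first exact: countableP.
move=> [ms hs]; destruct (pselect (Wb (ms, hs) `<=` Op)) as [h|h] => /=; last exact: measurable0.
clear h.
have -> : f @^-1` Wb (ms, hs) = [set x | proj1_sig (f x) `&` Kms ms = set0] `&`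
   [set x | forall i, i \in hs -> proj1_sig (f x) `&` (openbox i `&` strip d) !=set0].
  by [].
apply: measurableI; first exact: (H1 _ (Kms_compact ms) (@Kms_strip ms)).
elim: hs => [|i hs IH].
  by have -> : [set x | forall i, i \in [::] -> proj1_sig (f x) `&` (openbox i `&` strip d) !=set0] = setT
    by apply/seteqP; split.
have -> : [set x | forall j, j \in i :: hs -> proj1_sig (f x) `&` (openbox j `&` strip d) !=set0] =
  [set x | proj1_sig (f x) `&` (openbox i `&` strip d) !=set0] `&`
  [set x | forall j, j \in hs -> proj1_sig (f x) `&` (openbox j `&` strip d) !=set0].
  apply/seteqP; split => x.
    by move=> h; split => [|j jh]; apply: h; rewrite inE ?eqxx ?jh ?orbT.
  by move=> [h1 h2] j; rewrite inE => /orP [/eqP ->|/h2].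
exact: measurableI.
Qed.

End Fell.
Section Meas.
Context {R : realType} {L : topologicalType}.
Context (b : nat -> set L) (hb : good_base b).
Local Notation Ct := (@Ct R L).
Local Notation tr := (@tr R L).

Lemma misses_meas u (K : set (R * L)) : compact K -> K `<=` strip u ->
  measurable [set Z : Ct u | proj1_sig Z `&` K = set0].
Proof.
move=> cK sK; apply: sub_sigma_algebra => F hS _ _ _; apply: hS.
by left; exists K.
Qed.

Definition hitset u (al be p q : R) (B : set L) : set (Ct u) :=
  [set Z | exists z, [/\ proj1_sig Z z, al < z.1 < be, p <= z.1 <= q & B z.2]].

Lemma hits_meas u al be p q (B : set L) : open B ->
  measurable (hitset u al be p q B).
Proof.
move=> oB.
pose Kc (i : idx) : set (R * L) :=
  closedbox b i `&` ((`[p, q] `*` [set: L]) `&` strip u).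
have cKc i : compact (Kc i).
  apply: (compact_closedI (closedbox_compact b i)).
  exact (closedI (closedXT _ (@itv_closed _ R p q)) (closed_strip u)).
have -> : hitset u al be p q B = bigcup [set: idx] (fun i =>
    if pselect ([/\ al < ratr i.1.1, ratr i.1.2 < be & cb b i.2 `<=` B])
    then ~` [set Z : Ct u | proj1_sig Z `&` Kc i = set0] else set0).
  apply/seteqP; split => Z.
    move=> [z [Zz /andP [z1 z2] /andP [z3 z4] Bz]].
    have [r1] := @rat_in_itvoo R al z.1 z1.
    rewrite in_itv /= => /andP [r1a r1b].
    have [r2] := @rat_in_itvoo R z.1 be z2.
    rewrite in_itv /= => /andP [r2a r2b].
    have Bn : nbhs z.2 B by apply: open_nbhs_nbhs.
    have [n [bnz cbB cpt]] := hb.2 _ _ Bn.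
    have cbn : cb b n = closure (b n).
      by rewrite /cb; destruct (pselect (compact (closure (b n)))).
    exists (r1, r2, n) => //=.
    destruct (pselect ([/\ al < ratr r1, ratr r2 < be & cb b n `<=` B])) as [h|h];
      last by exfalso; apply: h; split => //; rewrite cbn.
    move=> /seteqP [+ _] => /(_ z) h0.
    suff : (proj1_sig Z `&` Kc (r1, r2, n)) z by move/h0.
    split => //; split; last split.
    - split; first by rewrite /= in_itv /=; apply/andP; split; lra.
      by rewrite /= cbn; exact: subset_closure.
    - by split => //; rewrite /= in_itv /=; apply/andP.
    - by apply: (proj2 (CtP Z)).
  move=> [i _]; destruct (pselect ([/\ al < ratr i.1.1, ratr i.1.2 < be & cb b i.2 `<=` B])) as [[h1 h2 h3]|h] => //.
  move=> /eqP /set0P [z [Zz [[/= + cz] [[/= + _] _]]]].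
  rewrite !in_itv /= => /andP [c1 c2] /andP [c3 c4].
  exists z; split => //; first by apply/andP; split; lra.
    by apply/andP.
  exact: h3.
apply: countable_bigcupT_measurable; first exact: countableP.
move=> i; destruct (pselect ([/\ al < ratr i.1.1, ratr i.1.2 < be & cb b i.2 `<=` B])) => /=; last exact: measurable0.
apply: measurableC; apply: misses_meas => //.
by move=> z [_ [_ ?]].
Qed.

End Meas.
Section Meas2.
Context {R : realType} {L : topologicalType}.
Context (b : nat -> set L) (hb : good_base b).
Local Notation Ct := (@Ct R L).
Local Notation tr := (@tr R L).

Lemma restrG_meas u d s : 0 <= s -> s + d <= u ->
  measurable_fun setT (restrG u d s : Ct u -> Ct d).
Proof.
move=> s0 sdu; apply: (@fell_measurable R L b hb d) => [K cK sK|i].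
  have -> : [set Z : Ct u | proj1_sig (restrG u d s Z) `&` K = set0] =
            [set Z : Ct u | proj1_sig Z `&` (tr s @` K) = set0].
    apply/seteqP; split => Z /= h; apply/seteqP; split => p // [].
    - move=> Zp /image_trP Kp.
      have : (proj1_sig (restrG u d s Z) `&` K) (tr (- s) p).
        split => //; apply/restrGP; split.
          by rewrite /= subrK -surjective_pairing.
        exact/stripP/sK.
      by rewrite h.
    - move=> /restrGP [Zp hp] Kp.
      have : (proj1_sig Z `&` tr s @` K) (p.1 + s, p.2).
        by split => //; exists p.
      by rewrite h.
  apply: misses_meas; first exact: compact_tr.
  move=> p /image_trP /sK /stripP /= /andP [h1 h2]; apply/stripP/andP; split; lra.
have -> : [set Z : Ct u | proj1_sig (restrG u d s Z) `&` (openbox b i `&` strip d) !=set0] =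
          hitset u (ratr i.1.1 + s) (ratr i.1.2 + s) s (s + d) (b i.2).
  apply/seteqP; split => Z.
    move=> [p [/restrGP [Zp /andP [h1 h2]] [[/= + bp] _]]].
    rewrite in_itv /= => /andP [c1 c2].
    by exists (p.1 + s, p.2); split => //=; apply/andP; split; lra.
  move=> [z [Zz /andP [c1 c2] /andP [c3 c4] bz]].
  exists (z.1 - s, z.2); split.
    apply/restrGP; rewrite /= subrK -surjective_pairing; split => //.
    by apply/andP; split; lra.
  split; first by split => //=; rewrite in_itv /=; apply/andP; split; lra.
  by apply/stripP/andP => /=; split; lra.
by apply: (hits_meas b hb); exact: hb.1.
Qed.

Lemma oplus_meas a e : 0 < a -> 0 < e ->
  measurable_fun setT (oplus a e : Ct a * Ct e -> Ct (a + e)).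
Proof.
move=> a0 e0; apply: (@fell_measurable R L b hb (a + e)) => [K cK sK|i].
  have -> : [set x : Ct a * Ct e | proj1_sig (oplus a e x) `&` K = set0] =
     [set Z1 : Ct a | proj1_sig Z1 `&` (K `&` strip a) = set0] `*`
     [set Z2 : Ct e | proj1_sig Z2 `&` (tr (- a) @` K `&` strip e) = set0].
    apply/seteqP; split => -[Z1 Z2] /=; rewrite oplusE ?ltW //.
    - move=> h; split; apply/seteqP; split => p // [Zp [Kp sp]].
      + have : ((proj1_sig Z1 `|` tr a @` proj1_sig Z2) `&` K) p.
          by split => //; left.
        by rewrite h.
      + rewrite image_trP opprK in Kp.
        have : ((proj1_sig Z1 `|` tr a @` proj1_sig Z2) `&` K) (tr a p).
          by split => //; right; exists p.
        by rewrite h.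
    - move=> [h1 h2]; apply/seteqP; split => p // [[Zp|/image_trP Zp] Kp].
      + have : (proj1_sig Z1 `&` (K `&` strip a)) p.
          by split => //; split => //; exact: (proj2 (CtP Z1)).
        by rewrite h1.
      + have : (proj1_sig Z2 `&` (tr (- a) @` K `&` strip e)) (tr (- a) p).
          split => //; split; first by exists p.
          exact: (proj2 (CtP Z2)).
        by rewrite h2.
  apply: measurableX; apply: misses_meas.
  - exact (compact_closedI cK (closed_strip a)).
  - by move=> p [].
  - exact (compact_closedI (compact_tr (- a) _ cK) (closed_strip e)).
  - by move=> p [].
have -> : [set x : Ct a * Ct e | proj1_sig (oplus a e x) `&` (openbox b i `&` strip (a + e)) !=set0] =
  (hitset a (ratr i.1.1) (ratr i.1.2) 0 (a + e) (b i.2) `*` [set: Ct e]) `|`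
  ([set: Ct a] `*` hitset e (ratr i.1.1 - a) (ratr i.1.2 - a) (- a) e (b i.2)).
  apply/seteqP; split => -[Z1 Z2] /=; rewrite oplusE ?ltW //.
  - move=> [p [[Zp|/image_trP Zp] [[/= + bp] /stripP /andP [s1 s2]]]];
      rewrite in_itv /= => /andP [c1 c2].
    + by left; split => //; exists p; split => //; apply/andP.
    + right; split => //; exists (tr (- a) p); split => //=; apply/andP; split; lra.
  - move=> [[[z [Zz c12 /andP [c3 c4] bz]] _]|[_ [z [Zz /andP [c1 c2] /andP [c3 c4] bz]]]].
    + exists z; split; first by left.
      split; first by split => //=; rewrite in_itv /=.
      by apply/stripP/andP.
    + exists (tr a z); split; first by right; exists z.
      split; first by split => //=; rewrite in_itv /=; apply/andP; split; lra.
      by apply/stripP/andP => /=; split; lra.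
apply: measurableU; apply: measurableX => //; by apply: (hits_meas b hb); exact: hb.1.
Qed.

Lemma H_meas u r : measurable [set Z : Ct u | exists l, proj1_sig Z (r, l)].
Proof.
have -> : [set Z : Ct u | exists l, proj1_sig Z (r, l)] =
    hitset u (r - 1) (r + 1) r r [set: L].
  apply/seteqP; split => Z.
    by move=> [l Zl]; exists (r, l); split => //=; apply/andP; split; lra.
  move=> [z [Zz _ /andP [c1 c2] _]]; exists z.2.
  have -> : r = z.1 by apply/le_anti/andP.
  by rewrite -surjective_pairing.
by apply: (hits_meas b hb); exact: openT.
Qed.

End Meas2.
Section Prod.
Local Open Scope ereal_scope.
Context {R : realType} d1 d2 (X : measurableType d1) (Y : measurableType d2).
Context (P1 : probability X R) (P2 : probability Y R).

Lemma prod_null_l (E : set (X * Y)) (H : set X) (B : set Y) :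
  measurable E -> measurable H -> measurable B -> P1 H = 0 ->
  (forall x y, ~ H x -> (E (x, y) <-> B y)) -> (P1 \x P2) E = P2 B.
Proof.
move=> mE mH mB H0 hE; apply/le_anti/andP; split.
  have sub : E `<=` (H `*` setT) `|` (setT `*` B).
    move=> [x y] Exy; have [Hx|nHx] := pselect (H x); first by left.
    by right; split => //; apply/(hE x y nHx).
  have mU : measurable (H `*` [set: Y] `|` [set: X] `*` B).
    by apply: measurableU; apply: measurableX.
  apply: (le_trans (le_measure _ _ _ sub)); rewrite ?in_setE //.
  apply: (le_trans (measureU2 _ _ _)); try by apply: measurableX.
  have e1 := product_measure1E P1 P2 mH (@measurableT _ Y).
  have e2 := product_measure1E P1 P2 (@measurableT _ X) mB.
  rewrite /= in e1 e2 *.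
  by rewrite e1 e2 H0 mul0e add0e probability_setT mul1e.
have sub2 : (~` H) `*` B `<=` E.
  by move=> [x y] [/= nHx By]; apply/(hE x y nHx).
have mC : measurable ((~` H) `*` B) by apply: measurableX => //; exact: measurableC.
apply: le_trans (le_measure _ _ _ sub2); rewrite ?in_setE //.
have e3 := product_measure1E P1 P2 (measurableC mH) mB.
rewrite /= in e3 *.
by rewrite e3 probability_setC // H0 sube0 mul1e.
Qed.

Lemma prod_null_r (E : set (X * Y)) (H : set Y) (A : set X) :
  measurable E -> measurable H -> measurable A -> P2 H = 0 ->
  (forall x y, ~ H y -> (E (x, y) <-> A x)) -> (P1 \x P2) E = P1 A.
Proof.
move=> mE mH mA H0 hE; apply/le_anti/andP; split.
  have sub : E `<=` (A `*` setT) `|` (setT `*` H).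
    move=> [x y] Exy; have [Hy|nHy] := pselect (H y); first by right.
    by left; split => //; apply/(hE x y nHy).
  have mU : measurable (A `*` [set: Y] `|` [set: X] `*` H).
    by apply: measurableU; apply: measurableX.
  apply: (le_trans (le_measure _ _ _ sub)); rewrite ?in_setE //.
  apply: (le_trans (measureU2 _ _ _)); try by apply: measurableX.
  have e1 := product_measure1E P1 P2 mA (@measurableT _ Y).
  have e2 := product_measure1E P1 P2 (@measurableT _ X) mH.
  rewrite /= in e1 e2 *.
  by rewrite e1 e2 H0 mule0 adde0 probability_setT mule1.
have sub2 : A `*` (~` H) `<=` E.
  by move=> [x y] [/= Ax nHy]; apply/(hE x y nHy).
have mC : measurable (A `*` (~` H)) by apply: measurableX => //; exact: measurableC.
apply: le_trans (le_measure _ _ _ sub2); rewrite ?in_setE //.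
have e3 := product_measure1E P1 P2 mA (measurableC mH).
rewrite /= in e3 *.
by rewrite e3 probability_setC // H0 sube0 mule1.
Qed.

End Prod.

Section AC.
Local Open Scope ereal_scope.
Context {R : realType} d (T : measurableType d).

Lemma ac_iff (m1 m2 : set T -> \bar R) :
  (forall A B, measurable A -> measurable B -> A `<=` B -> m1 A <= m1 B) ->
  (forall A, 0 <= m1 A) ->
  (forall A B, measurable A -> measurable B -> A `<=` B -> m2 A <= m2 B) ->
  (forall A, 0 <= m2 A) ->
  mutually_ac m1 m2 -> forall X, measurable X -> (m1 X = 0 <-> m2 X = 0).
Proof.
move=> mo1 p1 mo2 p2 [h12 h21] X mX; split => h.
- apply: (h21 X) => // A mA AX.
  by apply/le_anti/andP; split; [rewrite -h; exact: mo1|exact: p1].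
- apply: (h12 X) => // A mA AX.
  by apply/le_anti/andP; split; [rewrite -h; exact: mo2|exact: p2].
Qed.

End AC.
Section Main.
Context {R : realType} {L : topologicalType} (b : nat -> set L) (hb : good_base b).
Context (mu : forall t : R, probability (@Ct R L t) R) (mu_fact : factorizing mu).
Local Notation Ct := (@Ct R L).

Lemma pre_meas d1 d2 (X : measurableType d1) (Y : measurableType d2) (f : X -> Y) :
  measurable_fun setT f -> forall A, measurable A -> measurable (f @^-1` A).
Proof. by move=> mf A mA; have := mf measurableT A mA; rewrite setTI. Qed.

Lemma mono_mu t (A B : set (Ct t)) : measurable A -> measurable B -> A `<=` B ->
  (mu t A <= mu t B)%E.
Proof. by move=> mA mB AB; apply: le_measure; rewrite ?in_setE. Qed.

Lemma mono_push a e (A B : set (Ct (a + e))) : 0 < a -> 0 < e ->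
  measurable A -> measurable B -> A `<=` B ->
  (pushforward (mu a \x mu e)%E (@oplus R L a e) A <=
   pushforward (mu a \x mu e)%E (@oplus R L a e) B)%E.
Proof.
move=> a0 e0 mA mB AB; rewrite /pushforward.
have mo := @oplus_meas R L b hb a e a0 e0.
apply: le_measure; rewrite ?in_setE.
- by have := mo measurableT A mA; rewrite setTI.
- by have := mo measurableT B mB; rewrite setTI.
- by move=> x Ax; apply: AB.
Qed.

Lemma ac_fact a e (X : set (Ct (a + e))) : 0 < a -> 0 < e -> measurable X ->
  (mu (a + e) X = 0%E <->
   (mu a \x mu e)%E (@oplus R L a e @^-1` X) = 0%E).
Proof.
move=> a0 e0 mX.
apply: (@ac_iff R _ _ (mu (a + e)) (pushforward (mu a \x mu e)%E (@oplus R L a e))) => //.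
- exact: mono_mu.
- by move=> A B mA mB AB; exact: mono_push.
- by move=> ?; rewrite /pushforward; apply: measure_ge0.
- exact: mu_fact.1.
Qed.

Lemma stepA a e c d (A : set (Ct d)) : 0 < a -> 0 < e -> 0 < d -> d <= e ->
  a + e = c -> measurable A ->
  (mu c (restrG c d a @^-1` A) = 0%E <-> mu e (restrG e d 0 @^-1` A) = 0%E).
Proof.
move=> a0 e0 d0 de <- mA.
have mr := @restrG_meas R L b hb (a + e) d a (ltW a0) ltac:(lra).
have mX : measurable (restrG (a + e) d a @^-1` A).
  by move: (mr measurableT A mA); rewrite setTI.
apply: (iff_trans (ac_fact a e _ a0 e0 mX)).
have mo := @oplus_meas R L b hb a e a0 e0.
have mr2 := @restrG_meas R L b hb e d 0 (lexx 0) ltac:(lra).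
rewrite (@prod_null_l R _ _ _ _ (mu a) (mu e) _
   [set Z : Ct a | exists l, proj1_sig Z (a, l)] (restrG e d 0 @^-1` A)).
- by [].
- by move: (mo measurableT _ mX); rewrite setTI.
- exact: (H_meas b hb).
- by move: (mr2 measurableT A mA); rewrite setTI.
- by apply: (mu_fact.2 a a0 a); rewrite lexx ltW.
- by move=> Z1 Z2 nH; rewrite /= (restr_oplus_l _ _ _ _ _ a0 e0 nH).
Qed.

Lemma stepB d e c (A : set (Ct d)) : 0 < d -> 0 < e -> d + e = c -> measurable A ->
  (mu c (restrG c d 0 @^-1` A) = 0%E <-> mu d A = 0%E).
Proof.
move=> d0 e0 <- mA.
have mr := @restrG_meas R L b hb (d + e) d 0 (lexx 0) ltac:(lra).
have mX : measurable (restrG (d + e) d 0 @^-1` A).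
  by move: (mr measurableT A mA); rewrite setTI.
apply: (iff_trans (ac_fact d e _ d0 e0 mX)).
have mo := @oplus_meas R L b hb d e d0 e0.
rewrite (@prod_null_r R _ _ _ _ (mu d) (mu e) _
   [set Z : Ct e | exists l, proj1_sig Z (0, l)] A).
- by [].
- by move: (mo measurableT _ mX); rewrite setTI.
- exact: (H_meas b hb).
- exact: mA.
- by apply: (mu_fact.2 e e0 0); rewrite lexx ltW.
- by move=> Z1 Z2 nH; rewrite /= (restr_oplus_r _ _ _ _ d0 e0 nH).
Qed.

Lemma restr_id_mu u d (A : set (Ct d)) : u = d ->
  mu u (restrG u d 0 @^-1` A) = mu d A.
Proof.
move=> ud; subst d; congr (mu u _).
by apply/seteqP; split => Z /=; rewrite restr_id.
Qed.

Lemma key s t : 0 <= s -> s < t -> t <= 1 -> forall A, measurable A ->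
  (mu 1 (restrG 1 (t - s) s @^-1` A) = 0%E <-> mu (t - s) A = 0%E).
Proof.
move=> s0 st t1 A mA.
move: s0; rewrite le_eqVlt => /orP [/eqP s00|sp].
  subst s; move: t1; rewrite le_eqVlt => /orP [/eqP t1|t1].
    by subst t; rewrite restr_id_mu // subr0.
  by apply: (stepB (t - 0) (1 - t) 1 A) => //; lra.
move: t1; rewrite le_eqVlt => /orP [/eqP t1|t1].
  subst t.
  have h1 : 0 < 1 - s by lra.
  have h2 : 1 - s <= 1 - s by lra.
  have h3 : s + (1 - s) = 1 by lra.
  apply: (iff_trans (stepA s (1 - s) 1 (1 - s) A sp h1 h1 h2 h3 mA)).
  by rewrite restr_id_mu.
have h1 : 0 < 1 - s by lra.
have h0 : 0 < t - s by lra.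
have h2 : t - s <= 1 - s by lra.
have h3 : s + (1 - s) = 1 by lra.
apply: (iff_trans (stepA s (1 - s) 1 (t - s) A sp h1 h0 h2 h3 mA)).
by apply: (stepB (t - s) (1 - t) (1 - s) A) => //; lra.
Qed.

End Main.

Theorem lemma2p6 (R : realType) (L : topologicalType)
  (L_lc : locally_compact [set: L]) (L_sc : @second_countable L)
  (L_T2 : hausdorff_space L)
  (mu : forall t : R, probability (@Ct R L t) R)
  (mu_fact : factorizing mu) :
  forall s t : R, 0 <= s -> s < t -> t <= 1 ->
    mutually_ac (pushforward (mu 1) (@restr R L s t)) (mu (t - s)).
Proof.
move=> s t s0 st t1.
have [bb hb] := good_base_exists L_lc L_sc L_T2.
rewrite restr_restrG; split => N hN A mA AN; rewrite /pushforward.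
- by apply/(@key R L bb hb mu mu_fact s t s0 st t1 A mA); exact: hN.
- by apply/(@key R L bb hb mu mu_fact s t s0 st t1 A mA); exact: hN.
Qed.
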